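(* In generalized non-signalling theory (box world), consider a system of boxes each of which has at least two possible outputs. Let $(\mathbf{a}_1,\mathbf{x}_1)$ and $(\mathbf{a}_2,\mathbf{x}_2)$ be output-input pairs of the system such that it is not the case that both $\mathbf{a}_1=\mathbf{a}_2$ and $\mathbf{x}_1=\mathbf{x}_2$. Then there exists an allowed state $\mathbf{p}$ with $p(\mathbf{a}_1|\mathbf{x}_1)=0$ and $p(\mathbf{a}_2|\mathbf{x}_2)>0$.
   Context: Box world (GNST): a box has a finite set of inputs and outputs. A system of $n$ boxes has as allowed states all collections $p(\mathbf{a}|\mathbf{x})=p(a_1,\ldots,a_n|x_1,\ldots,x_n)\ge0$ that are normalized ($\sum_{\mathbf{a}}p(\mathbf{a}|\mathbf{x})=1$ for all $\mathbf{x}$) and no-signalling (for each $i$, $\sum_{a_i}p(\mathbf{a}|\mathbf{x})$ is independent of $x_i$). An output-input pair is a pair $(\mathbf{a},\mathbf{x})$ of an output tuple and an input tuple. *)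

(* Defs.v *)
From HB Require Import structures.
From mathcomp Require Import all_boot all_order all_algebra.
Set Implicit Arguments. Unset Strict Implicit. Unset Printing Implicit Defensive.
Import Order.TTheory GRing.Theory Num.Theory.
Local Open Scope ring_scope.

(* A system of n boxes: box i has finite output set A i and input set X i.
   Output tuples are {dffun forall i, A i}, input tuples {dffun forall i, X i}. *)
Section Box.
Variables (R : realFieldType) (n : nat) (A X : 'I_n -> finType).

Definition outs := {dffun forall i : 'I_n, A i}.
Definition ins := {dffun forall i : 'I_n, X i}.

(* p(a | x) is represented as p a x *)
Definition nonneg_state (p : outs -> ins -> R) : Prop :=
  forall a x, 0 <= p a x.

Definition normalized (p : outs -> ins -> R) : Prop :=
  forall x, \sum_(a : outs) p a x = 1.

(* No-signalling: for each i, the marginal sum_{a_i} p(a|x) (a function of the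
   other outputs a_{-i} and of x) does not depend on x_i. *)
Definition no_signalling (p : outs -> ins -> R) : Prop :=
  forall (i : 'I_n) (x x' : ins),
    (forall j, j != i -> x j = x' j) ->
    forall a : outs,
      \sum_(b : outs | [forall j, (j != i) ==> (b j == a j)]) p b x =
      \sum_(b : outs | [forall j, (j != i) ==> (b j == a j)]) p b x'.

Definition allowed_state (p : outs -> ins -> R) : Prop :=
  [/\ nonneg_state p, normalized p & no_signalling p].

End Box.

(* Main.v *)
Require Import Defs.
From HB Require Import structures.
From mathcomp Require Import all_boot all_order all_algebra.
Import Order.TTheory GRing.Theory Num.Theory.
Local Open Scope ring_scope.

Lemma sum_ind (R : realFieldType) (T : finType) (P : pred T) (c : T) :
  \sum_(b | P b) ((b == c)%:R : R) = (P c)%:R.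
Proof.
rewrite big_mkcond (bigD1 c) //= eqxx big1 ?addr0; first by case: (P c).
by move=> b /negbTE ->; case: (P b).
Qed.

Lemma det_allowed (R : realFieldType) (n : nat) (A X : 'I_n -> finType)
  (c : ins X -> outs A)
  (hc : forall (i : 'I_n) (x x' : ins X), (forall j, j != i -> x j = x' j) ->
        forall j, j != i -> c x j = c x' j) :
  allowed_state (fun b x => ((b == c x)%:R : R)).
Proof.
split.
- by move=> a x; exact: ler0n.
- by move=> x; have := @sum_ind R _ predT (c x).
- move=> i x x' hx a; rewrite !sum_ind; congr (_%:R); congr nat_of_bool.
  apply: eq_forallb => j; case: (boolP (j != i)) => //= hj.
  by rewrite (hc i x x' hx j hj).
Qed.

Theorem lemma8 (R : realFieldType) (n : nat) (A X : 'I_n -> finType)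
    (hA : forall i : 'I_n, (1 < #|A i|)%N)
    (a1 a2 : outs A) (x1 x2 : ins X)
    (hneq : ~ (a1 = a2 /\ x1 = x2)) :
  exists p : outs A -> ins X -> R,
    allowed_state p /\ p a1 x1 = 0 /\ 0 < p a2 x2.
Proof.
case: (eqVneq a1 a2) => [ea|na].
- subst a2.
  have : exists i, x1 i != x2 i.
    apply/existsP; apply: contraT; rewrite negb_exists => /forallP h.
    exfalso; apply: hneq; split => //; apply/ffunP => i.
    by move: (h i); rewrite negbK => /eqP.
  case=> i hi.
  have : exists y : A i, y != a1 i.
    apply/existsP; apply: contraT; rewrite negb_exists => /forallP h.
    have : (#|A i| <= 1)%N by apply/card_le1_eqP => y z _ _;
      move: (h y) (h z); rewrite !negbK => /eqP -> /eqP ->.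
    by rewrite leqNgt hA.
  case=> y hy.
  pose a' : outs A := [ffun j => dfwith (fun k => a1 k) y j].
  pose c := fun x : ins X => if x i == x2 i then a1 else a'.
  exists (fun b x => ((b == c x)%:R : R)); split; last split.
  + apply: det_allowed => k x x' hx j hj.
    case: (eqVneq k i) => [eki|nki].
    * subst k; have aj : a' j = a1 j by rewrite /a' ffunE dfwith_out // eq_sym.
      by rewrite /c; case: (x i == x2 i); case: (x' i == x2 i); rewrite ?aj.
    * by rewrite /c (hx i) // eq_sym.
  + rewrite /c (negbTE hi); case: eqP => // e.
    by move: hy; rewrite e /a' ffunE dfwith_in eqxx.
  + by rewrite /c eqxx eqxx ltr01.
- exists (fun b x => ((b == a2)%:R : R)); split; last split.
  + by apply: det_allowed.
  + by rewrite (negbTE na).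
  + by rewrite eqxx ltr01.
Qed.
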